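(* Let $(S,K,I)$ be an active split graph. If $\Phi(S)$ is simple and connected but not complete, then the factor graph $\Phi(\overline{S})$ of the split graph $(\overline{S},I,K)$ is complete but not simple.
   Context: All graphs are finite and simple. A split graph is a graph $S$ whose vertex set is a disjoint union $V(S)=K\,\dot\cup\,I$ with $K$ a clique and $I$ an independent set; $(K,I)$ is called a bipartition of $S$, and $(S,K,I)$ denotes $S$ together with this fixed bipartition. $\overline{S}$ is the complement of $S$; it is a split graph with clique $I$ and independent set $K$. A 2-switch in a graph $G$ is performed on four distinct vertices $a,b,c,d$ with $ab,cd\in E(G)$ and $ac,bd\notin E(G)$: it deletes $ab,cd$ and adds $ac,bd$; $a,b,c,d$ are said to participate in it. A vertex is active in $G$ if it participates in some 2-switch on $G$; $G$ is active if all its vertices are active. For a split graph $(S,K,I)$ and distinct $u,v\in I$, $\sigma_{uv}(S)$ is the number of induced subgraphs of $S$ isomorphic to $P_4$ containing both $u$ and $v$. The factor graph $\Phi(S)$ is the loopless multigraph with vertex set $I$ having exactly $\sigma_{uv}(S)$ parallel edges between $u$ and $v$; it is simple if $\sigma_{uv}(S)\in\{0,1\}$ for all $u,v$. Graph notions (connected, complete, etc.) applied to $\Phi(S)$ refer to its underlying simple graph, in which $u\sim v$ iff $\sigma_{uv}(S)\ge1$. *)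

(* Defs.v *)
From mathcomp Require Import all_boot.
Set Implicit Arguments. Unset Strict Implicit. Unset Printing Implicit Defensive.

Section Graphs.
Variable T : finType.

Definition simple_graph (e : rel T) : Prop :=
  symmetric e /\ irreflexive e.

Definition compl_graph (e : rel T) : rel T := fun x y => (x != y) && ~~ e x y.

Definition is_split (e : rel T) (K I : {set T}) : Prop :=
  [disjoint K & I] /\ K :|: I = [set: T] /\
  (forall x y, x \in K -> y \in K -> x != y -> e x y) /\
  (forall x y, x \in I -> y \in I -> ~~ e x y).

Definition two_switch (e : rel T) (a b c d : T) : bool :=
  [&& uniq [:: a; b; c; d], e a b, e c d, ~~ e a c & ~~ e b d].

Definition active_vertex (e : rel T) (x : T) : Prop :=
  exists a b c d, two_switch e a b c d /\ x \in [:: a; b; c; d].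

Definition active_graph (e : rel T) : Prop := forall x, active_vertex e x.

Definition induced_P4 (e : rel T) (X : {set T}) : bool :=
  [exists a, exists b, exists c, exists d,
    [&& uniq [:: a; b; c; d], X == [set a; b; c; d],
        e a b, e b c, e c d, ~~ e a c, ~~ e b d & ~~ e a d]].

Definition sigma (e : rel T) (u v : T) : nat :=
  #|[set X : {set T} | [&& u \in X, v \in X & induced_P4 e X]]|.

(* factor graph Phi(S) on vertex set I (underlying simple graph) *)
Definition factor_adj (e : rel T) (u v : T) : bool := (u != v) && (0 < sigma e u v).

Definition factor_simple (e : rel T) (I : {set T}) : Prop :=
  forall u v, u \in I -> v \in I -> u != v -> sigma e u v <= 1.

Definition factor_complete (e : rel T) (I : {set T}) : Prop :=
  forall u v, u \in I -> v \in I -> u != v -> 0 < sigma e u v.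

Definition factor_connected (e : rel T) (I : {set T}) : Prop :=
  forall u v, u \in I -> v \in I ->
    exists p : seq T, [/\ all (mem I) p, path (factor_adj e) u p & last u p = v].

End Graphs.

(* Main.v *)
Require Import Defs.
From mathcomp Require Import all_boot.
From mathcomp Require Import zify.
Set Implicit Arguments. Unset Strict Implicit. Unset Printing Implicit Defensive.

Section S.
Variable T : finType.
Definition nb (e : rel T) (u : T) : {set T} := [set y | e u y].

Variables (e : rel T) (K I : {set T}).
Hypotheses (esy : symmetric e) (eirr : irreflexive e) (dKI : [disjoint K & I])
  (UKI : K :|: I = setT)
  (Kc : forall x y, x \in K -> y \in K -> x != y -> e x y)
  (Ii : forall x y, x \in I -> y \in I -> ~~ e x y).

Lemma inKI x : (x \in K) = (x \notin I).
Proof.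
apply/idP/idP => [xK|xnI]; first by rewrite (disjointFr dKI xK).
have : x \in K :|: I by rewrite UKI inE.
by rewrite inE (negbTE xnI) orbF.
Qed.

Lemma notK_I x : (x \in K -> False) -> x \in I.
Proof. rewrite inKI => H; apply/negPn/negP; exact: H. Qed.

Lemma notI_K x : (x \in I -> False) -> x \in K.
Proof. move=> H; rewrite inKI; apply/negP; exact: H. Qed.

Lemma nbI u y : u \in I -> e u y -> y \in K.
Proof. move=> uI euy; apply: notI_K => yI; by move: (Ii uI yI); rewrite euy. Qed.

Lemma neqKI x y : x \in K -> y \in I -> x != y.
Proof. move=> xK yI; apply/eqP=> exy; move: xK; by rewrite inKI exy yI. Qed.

Lemma P4_shape a b c d : uniq [:: a; b; c; d] -> e a b -> e b c -> e c d ->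
  ~~ e a c -> ~~ e b d -> ~~ e a d -> [/\ a \in I, b \in K, c \in K & d \in I].
Proof.
rewrite /= !inE !negb_or => /and4P [/and3P [ab ac ad] /andP [bc bd] cd _].
move=> eab ebc ecd eac ebd ead.
have aI : a \in I.
  apply: notK_I => aK.
  have cI : c \in I by apply: notK_I => cK; move: (Kc aK cK ac); rewrite (negbTE eac).
  have dI : d \in I by apply: notK_I => dK; move: (Kc aK dK ad); rewrite (negbTE ead).
  by move: (Ii cI dI); rewrite ecd.
have dI : d \in I.
  apply: notK_I => dK.
  have bI : b \in I.
    apply: notK_I => bK; move: (Kc bK dK bd); by rewrite (negbTE ebd).
  by move: (Ii aI bI); rewrite eab.
split=> //.
- apply: notI_K => bI; by move: (Ii aI bI); rewrite eab.
- apply: notI_K => cI; by move: (Ii cI dI); rewrite ecd.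
Qed.

Lemma sigma_formula u v : u \in I -> v \in I -> u != v ->
  sigma e u v = #|nb e u :\: nb e v| * #|nb e v :\: nb e u|.
Proof.
move=> uI vI uv.
set A := nb e u :\: nb e v; set B := nb e v :\: nb e u.
pose f (p : T * T) : {set T} := [set u; v; p.1; p.2].
have memA b : (b \in A) = e u b && ~~ e v b by rewrite !inE andbC.
have memB c : (c \in B) = e v c && ~~ e u c by rewrite !inE andbC.
rewrite /sigma.
have -> : [set X : {set T} | [&& u \in X, v \in X & induced_P4 e X]] = f @: setX A B.
  apply/setP => X; rewrite inE; apply/idP/idP.
  - case/and3P => uX vX /existsP [a /existsP [b /existsP [c /existsP [d]]]].
    case/and5P => Hu HX eab ebc /and4P [ecd eac ebd ead].
    have [aI bK cK dI] := P4_shape Hu eab ebc ecd eac ebd ead.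
    have ub : (u == b) = false by rewrite eq_sym; apply/negbTE/neqKI.
    have uc : (u == c) = false by rewrite eq_sym; apply/negbTE/neqKI.
    have vb : (v == b) = false by rewrite eq_sym; apply/negbTE/neqKI.
    have vc : (v == c) = false by rewrite eq_sym; apply/negbTE/neqKI.
    rewrite (eqP HX) !inE ub uc vb vc !orbF in uX vX.
    apply/imsetP.
    case/orP: uX => /eqP eu; case/orP: vX => /eqP ev.
    + by move: uv; rewrite eu ev eqxx.
    + subst a d; exists (b, c).
        by rewrite in_setX memA memB /=; apply/andP; split; apply/andP; split => //; rewrite esy.
      by rewrite (eqP HX) /f /=; apply/setP => z; rewrite !inE; do ![case: (_ == _)].
    + subst a d; exists (c, b).
        by rewrite in_setX memA memB /=; apply/andP; split; apply/andP; split => //; rewrite esy.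
      by rewrite (eqP HX) /f /=; apply/setP => z; rewrite !inE; do ![case: (_ == _)].
    + by move: uv; rewrite eu ev eqxx.
  - case/imsetP => [[b c]]; rewrite in_setX memA memB /= => /andP [/andP [eub evb] /andP [evc euc]] ->.
    have bK := nbI uI eub; have cK := nbI vI evc.
    rewrite /f /= !inE !eqxx /= orbT /=.
    apply/existsP; exists u; apply/existsP; exists b; apply/existsP; exists c;
      apply/existsP; exists v.
    have bc : b != c by apply/eqP => ebc; move: euc; rewrite -ebc eub.
    rewrite eub (esy c v) evc euc (esy b v) evb Ii //= Kc //.
    have ub : u != b by rewrite eq_sym neqKI.
    have uc : u != c by rewrite eq_sym neqKI.
    have bv : b != v by rewrite neqKI.
    have cv : c != v by rewrite neqKI.
    rewrite /= !inE !negb_or uv ub uc bc bv cv /= andbT.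
    apply/eqP/setP => z; rewrite !inE; by do ![case: (_ == _)].
rewrite card_in_imset ?cardsX //.
move=> [b c] [b' c']; rewrite !in_setX !memA !memB /=.
move=> /andP [/andP [eub evb] /andP [evc euc]] /andP [/andP [eub' evb'] /andP [evc' euc']].
rewrite /f /= => E.
have bK := nbI uI eub; have cK := nbI vI evc.
have bK' := nbI uI eub'; have cK' := nbI vI evc'.
have hb : b \in [set u; v; b'; c'] by rewrite -E !inE eqxx !orbT.
have hc : c \in [set u; v; b'; c'] by rewrite -E !inE eqxx !orbT.
rewrite !inE (negbTE (neqKI bK uI)) (negbTE (neqKI bK vI)) /= in hb.
rewrite !inE (negbTE (neqKI cK uI)) (negbTE (neqKI cK vI)) /= in hc.
case/orP: hb => /eqP hb; last by move: euc'; rewrite -hb eub.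
case/orP: hc => /eqP hc; first by move: evb'; rewrite -hc evc.
by rewrite hb hc.
Qed.

Lemma ts_K a b c d : two_switch e a b c d -> a \in K -> [/\ b \in I, c \in I, e a b & ~~ e a c].
Proof.
case/and5P => U eab ecd eac ebd aK.
move: U; rewrite /= !inE !negb_or => /and4P [/and3P [ab ac ad] /andP [bc bd] cd _].
have cI : c \in I by apply: notK_I => cK; move: (Kc aK cK ac); rewrite (negbTE eac).
have dK : d \in K by apply: notI_K => dI; move: (Ii cI dI); rewrite ecd.
have bI : b \in I by apply: notK_I => bK; move: (Kc bK dK bd); rewrite (negbTE ebd).
by split.
Qed.

Lemma ts_perm a b c d : two_switch e a b c d ->
  [/\ two_switch e b a d c, two_switch e c d a b & two_switch e d c b a].
Proof.
case/and5P => U eab ecd eac ebd.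
move: U; rewrite /= !inE !negb_or => /and4P [/and3P [ab ac ad] /andP [bc bd] cd _].
split; apply/and5P; split; try done; try by rewrite esy.
all: rewrite /= !inE !negb_or ?(eq_sym b a) ?(eq_sym c a) ?(eq_sym d a) ?(eq_sym c b)
   ?(eq_sym d b) ?(eq_sym d c) ab ac ad bc bd cd.
all: done.
Qed.
End S.

Theorem corollary5p4 (T : finType) (e : rel T) (K I : {set T}) :
  simple_graph e -> is_split e K I -> active_graph e ->
  factor_simple e I -> factor_connected e I -> ~ factor_complete e I ->
  factor_complete (compl_graph e) K /\ ~ factor_simple (compl_graph e) K.
Proof.
move=> [esy eirr] [dKI [UKI [Kc Ii]]] act fs fc nfc.
have sf := sigma_formula esy dKI UKI Kc Ii.
have csy : symmetric (compl_graph e) by move=> x y; rewrite /compl_graph eq_sym esy.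
have cirr : irreflexive (compl_graph e) by move=> x; rewrite /compl_graph eqxx.
have dIK : [disjoint I & K] by rewrite disjoint_sym.
have UIK : I :|: K = setT by rewrite setUC.
have cIc : forall x y, x \in I -> y \in I -> x != y -> compl_graph e x y.
  by move=> x y xI yI xy; rewrite /compl_graph xy Ii.
have cKi : forall x y, x \in K -> y \in K -> ~~ compl_graph e x y.
  move=> x y xK yK; rewrite /compl_graph negb_and negbK.
  by case: (eqVneq x y) => [->|xy]; rewrite ?eqxx //= Kc.
have csf := sigma_formula csy dIK UIK cIc cKi.
pose N := nb e.
have NE u z : (z \in N u) = e u z by rewrite inE.
have Hadj u w : u \in I -> w \in I -> factor_adj e u w -> #|N u| = #|N w|.
  move=> uI wI /andP [uw]; have := fs u w uI wI uw; rewrite sf // -/N => h1 h2.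
  have E1 := cardsID (N w) (N u); have E2 := cardsID (N u) (N w).
  rewrite [N w :&: N u]setIC in E2.
  move: h2; rewrite muln_gt0 => /andP [a1 a2].
  have a3 : #|N u :\: N w| = 1 by nia.
  have a4 : #|N w :\: N u| = 1 by nia.
  rewrite -E1 -E2 a3 a4 //.
have Hpath : forall p u, u \in I -> all (mem I) p -> path (factor_adj e) u p ->
    #|N (last u p)| = #|N u|.
  elim=> //= w p IH u uI /andP [wI allp] /andP [adj pth].
  by rewrite IH // (Hadj u w).
have Hsz u v : u \in I -> v \in I -> #|N u| = #|N v|.
  move=> uI vI; have [p [allp pth lst]] := fc u v uI vI.
  by rewrite -lst Hpath.
have Hswap u v x y : u \in I -> v \in I -> e u x -> ~~ e v x -> e u y -> y != x -> e v y.
  move=> uI vI eux evx euy yx.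
  have uv : u != v by apply/eqP => E; move: evx; rewrite -E eux.
  apply/negPn/negP => evy.
  have h2 : 2 <= #|N u :\: N v|.
    have <- : #|[set x; y]| = 2 by rewrite cards2 eq_sym yx.
    apply: subset_leq_card; apply/subsetP => z; rewrite !inE.
    by case/orP => /eqP ->; rewrite ?eux ?euy ?evx ?evy.
  have h1 : 0 < #|N v :\: N u|.
    rewrite lt0n cards_eq0 setD_eq0; apply/negP => sub.
    have : N v == N u by rewrite eqEcard sub (Hsz u v uI vI) leqnn.
    move/eqP => E; have : x \in N v by rewrite E NE.
    by rewrite NE (negbTE evx).
  have := fs u v uI vI uv; rewrite sf // -/N => h3; nia.
have Hact x : x \in K -> (exists u, u \in I /\ e x u) /\ (exists w, w \in I /\ ~~ e x w).
  move=> xK; have [a [b [c [d [ts]]]]] := act x.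
  have [ts1 ts2 ts3] := ts_perm esy ts.
  rewrite !inE => /or4P [] /eqP E; subst x.
  - have [h1 h2 h3 h4] := ts_K dKI UKI Kc Ii ts xK; split; [exists b | exists c]; by split.
  - have [h1 h2 h3 h4] := ts_K dKI UKI Kc Ii ts1 xK; split; [exists a | exists d]; by split.
  - have [h1 h2 h3 h4] := ts_K dKI UKI Kc Ii ts2 xK; split; [exists d | exists a]; by split.
  - have [h1 h2 h3 h4] := ts_K dKI UKI Kc Ii ts3 xK; split; [exists c | exists b]; by split.
have L x y : x \in K -> y \in K -> x != y -> exists z, [/\ z \in I, e y z & ~~ e x z].
  move=> xK yK xy.
  case: (boolP [exists z, [&& z \in I, e y z & ~~ e x z]]) => [/existsP [z /and3P [*]]|/existsPn H].
    by exists z.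
  have [[u [uI eyu]] _] := Hact y yK.
  have [_ [w [wI exw]]] := Hact x xK.
  have exu : e x u by move: (H u); rewrite uI eyu /= negbK.
  have ewy : e w y.
    apply: (Hswap u w x y uI wI); rewrite ?(esy u) ?(esy w) //.
    by rewrite eq_sym.
  by move: (H w); rewrite wI (esy y) ewy exw.
split.
  move=> x y xK yK xy; rewrite csf // muln_gt0.
  have [z [zI eyz exz]] := L x y xK yK xy.
  have yx : y != x by rewrite eq_sym.
  have [zz [zzI exzz eyzz]] := L y x yK xK yx.
  apply/andP; split; apply/card_gt0P; [exists z | exists zz]; rewrite !inE /compl_graph.
    by rewrite eyz exz (neqKI dKI UKI xK zI) andbF.
  by rewrite exzz eyzz (neqKI dKI UKI yK zzI) andbF.
move=> cfs.
case: (boolP [exists u, exists v, [&& u \in I, v \in I, u != v & sigma e u v == 0]]);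
  last first.
  move/existsPn => H; apply: nfc => u v uI vI uv.
  by move: (H u) => /existsPn /(_ v); rewrite uI vI uv /= lt0n.
case/existsP => u /existsP [v /and4P [uI vI uv /eqP s0]].
have Neq : N u = N v.
  move: s0; rewrite sf // -/N => /eqP; rewrite muln_eq0 !cards_eq0 !setD_eq0.
  case/orP => sub; apply/eqP.
    by rewrite eqEcard sub (Hsz v u vI uI) leqnn.
  by rewrite eq_sym eqEcard sub (Hsz u v uI vI) leqnn.
have [p [allp pth lst]] := fc u v uI vI.
case: p allp pth lst => [|w p] /=; first by move=> _ _ E; move: uv; rewrite E eqxx.
move=> /andP [wI _] /andP [/andP [uw]] + _ _.
rewrite sf // -/N muln_gt0 => /andP [/card_gt0P [x]] + /card_gt0P [y].
rewrite !inE => /andP [ewx eux] /andP [euy ewy].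
have xK := nbI dKI UKI Ii uI eux.
have yK := nbI dKI UKI Ii wI ewy.
have xy : x != y by apply/eqP => E; move: euy; rewrite -E eux.
have evz z : e v z = e u z by rewrite -!NE Neq.
have := cfs x y xK yK xy; rewrite csf //.
have h1 : 0 < #|nb (compl_graph e) x :\: nb (compl_graph e) y|.
  apply/card_gt0P; exists w; rewrite !inE /compl_graph.
  by rewrite (esy y) ewy (esy x) (negbTE ewx) (neqKI dKI UKI xK wI) /= andbF.
have h2 : 2 <= #|nb (compl_graph e) y :\: nb (compl_graph e) x|.
  have <- : #|[set u; v]| = 2 by rewrite cards2 uv.
  apply: subset_leq_card; apply/subsetP => z; rewrite !inE.
  case/orP => /eqP ->; rewrite /compl_graph (esy x) (esy y) ?evz eux (negbTE euy) /=.
    by rewrite (neqKI dKI UKI yK uI) andbF.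
  by rewrite (neqKI dKI UKI yK vI) andbF.
move=> h3; have := leq_mul h1 h2; rewrite mul1n => h4.
by have := leq_trans h4 h3.
Qed.
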